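(* Let $n\in\mathbb N$, let $H_1,\dots,H_n$ be BF-monoids, and let $H=H_1\times\dots\times H_n$. Then (1) $\mathcal R(H)=\bigcup_{i=1}^n\mathcal R(H_i)$; (2) $\operatorname{Ca}(H)=\bigcup_{i=1}^n\operatorname{Ca}(H_i)$; (3) $\daleth^*(H)=\bigcup_{i=1}^n\daleth^*(H_i)$.
   Context: A monoid is a commutative cancellative semigroup with identity; $H_{\mathrm{red}}=H/H^\times$, $\mathcal A(H)$ its atoms. For $a\in H$, $\mathsf Z(a)$ is the set of factorizations of $a$ (elements of the free abelian monoid on $\mathcal A(H_{\mathrm{red}})$ multiplying to $aH^\times$), $|z|$ the number of atoms in $z$, $\mathsf L(a)=\{|z|:z\in\mathsf Z(a)\}$. $H$ is a BF-monoid if $\mathsf L(a)$ is finite and nonempty for all $a\in H$. $\daleth^*(H) = \{\min(\mathsf L(uv)\setminus\{2\}) : u,v \in \mathcal A(H),\ |\mathsf L(uv)|>1\}$. Distance: writing $z = u_1\cdots u_k v_1\cdots v_\ell$, $z'=u_1\cdots u_k w_1\cdots w_m$ with no $v_i$ equal to any $w_j$, $\mathsf d(z,z')=\max\{\ell,m\}$. An $N$-chain from $z$ to $z'$ in $\mathsf Z(a)$ is a sequence $z=z_0,\dots,z_n=z'$ in $\mathsf Z(a)$ with $\mathsf d(z_{i-1},z_i)\le N$. $\mathsf c(a)$ is the least $N$ such that any two factorizations of $a$ are connected by an $N$-chain; $\operatorname{Ca}(H)=\{\mathsf c(a): a\in H,\ |\mathsf Z(a)|>1\}$. $\mathcal R(H)$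 is the set of $d\in\mathbb N_{\ge2}$ such that some $a\in H$ has distinct $z,z'\in\mathsf Z(a)$ with $\mathsf d(z,z')=d$ not connected by any $(d-1)$-chain. *)

(* Defs.v *)
From Stdlib Require Import List Arith Lia FunctionalExtensionality.
Import ListNotations.

Set Implicit Arguments.

Record monoid := Monoid {
  car :> Type;
  mul : car -> car -> car;
  one : car;
  mulA : forall a b c, mul a (mul b c) = mul (mul a b) c;
  mulC : forall a b, mul a b = mul b a;
  mul1 : forall a, mul one a = a;
  mulK : forall a b c, mul a b = mul a c -> b = c }.

Section Factorizations.
Variable M : monoid.

Definition is_unit (u : M) : Prop := exists v, mul M u v = one M.

Definition associated (a b : M) : Prop := exists e, is_unit e /\ a = mul M b e.

Definition atom (u : M) : Prop :=
  ~ is_unit u /\ forall b c, u = mul M b c -> is_unit b \/ is_unit c.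

Definition lprod (z : list M) : M := fold_right (mul M) (one M) z.

(* Two lists of atoms represent the same element of the free abelian monoid on
   A(H_red) iff they agree up to permutation and associates. *)
Inductive perm_assoc : list M -> list M -> Prop :=
  | pa_nil : perm_assoc [] []
  | pa_cons (x y : M) (l l1 l2 : list M) :
      associated x y -> perm_assoc l (l1 ++ l2) ->
      perm_assoc (x :: l) (l1 ++ y :: l2).

(* z (a list of atoms of H, read as the element of the free abelian monoid on
   A(H_red) formed by their classes) is a factorization of a. *)
Definition factorization (a : M) (z : list M) : Prop :=
  Forall atom z /\ associated (lprod z) a.

Definition in_L (a : M) (k : nat) : Prop :=
  exists z, factorization a z /\ length z = k.

Definition BF : Prop :=
  forall a : M, (exists k, in_L a k) /\ (exists N, forall k, in_L a k -> k <= N).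

(* d(z,z') <= N : z = c v, z' = c w with |v|,|w| <= N (the minimum over such
   splittings is attained at c = gcd(z,z'), giving the paper's d). *)
Definition dist_le (z z' : list M) (N : nat) : Prop :=
  exists c v w, perm_assoc z (c ++ v) /\ perm_assoc z' (c ++ w) /\
                length v <= N /\ length w <= N.

Definition dist (z z' : list M) (d : nat) : Prop :=
  dist_le z z' d /\ forall N, dist_le z z' N -> d <= N.

Inductive chain (a : M) (N : nat) : list M -> list M -> Prop :=
  | chain_refl z : factorization a z -> chain a N z z
  | chain_step z y z' : factorization a z -> dist_le z y N ->
      chain a N y z' -> chain a N z z'.

Definition catenary_le (a : M) (N : nat) : Prop :=
  forall z z', factorization a z -> factorization a z' -> chain a N z z'.

Definition catenary (a : M) (N : nat) : Prop :=
  catenary_le a N /\ forall K, catenary_le a K -> N <= K.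

Definition many_fact (a : M) : Prop :=
  exists z z', factorization a z /\ factorization a z' /\ ~ perm_assoc z z'.

Definition Ca (c : nat) : Prop := exists a, many_fact a /\ catenary a c.

Definition Rset (d : nat) : Prop :=
  2 <= d /\ exists a z z', factorization a z /\ factorization a z' /\
    ~ perm_assoc z z' /\ dist z z' d /\ ~ chain a (d - 1) z z'.

Definition daleth_star (m : nat) : Prop :=
  exists u v, atom u /\ atom v /\
    (exists k l, in_L (mul M u v) k /\ in_L (mul M u v) l /\ k <> l) /\
    in_L (mul M u v) m /\ m <> 2 /\
    forall k, in_L (mul M u v) k -> k <> 2 -> m <= k.

End Factorizations.

Definition idx (n : nat) := {i : nat | i < n}.

Section Product.
Variable n : nat.
Variable H : idx n -> monoid.

Definition pcar := forall i, car (H i).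
Definition pmul (a b : pcar) : pcar := fun i => mul (H i) (a i) (b i).
Definition pone : pcar := fun i => one (H i).

Lemma pmulA a b c : pmul a (pmul b c) = pmul (pmul a b) c.
Proof. apply functional_extensionality_dep; intro i; apply mulA. Qed.
Lemma pmulC a b : pmul a b = pmul b a.
Proof. apply functional_extensionality_dep; intro i; apply mulC. Qed.
Lemma pmul1 a : pmul pone a = a.
Proof. apply functional_extensionality_dep; intro i; apply mul1. Qed.
Lemma pmulK a b c : pmul a b = pmul a c -> b = c.
Proof.
  intro E; apply functional_extensionality_dep; intro i.
  apply (@mulK (H i) (a i)). exact (f_equal (fun f => f i) E).
Qed.

Definition prod_monoid : monoid := @Monoid pcar pmul pone pmulA pmulC pmul1 pmulK.
End Product.

(* Main.v *)
Require Import Defs.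
From Stdlib Require Import List Arith Lia FunctionalExtensionality Permutation.
From Stdlib Require Import ClassicalEpsilon Classical Eqdep_dec Peano_dec Wf_nat.
Import ListNotations.
Set Implicit Arguments.

Arguments mul {m} _ _.
Arguments mulA {m} a b c.
Arguments mulC {m} a b.
Arguments mul1 {m} a.
Arguments mulK {m} a b c _.
Arguments is_unit {M} u.
Arguments associated {M} a b.
Arguments atom {M} u.
Arguments lprod {M} z.
Arguments perm_assoc {M} _ _.
Arguments pa_nil {M}.
Arguments factorization {M} a z.
Arguments in_L {M} a k.
Arguments dist_le {M} z z' N.
Arguments dist {M} z z' d.
Arguments chain {M} a N _ _.
Arguments catenary_le {M} a N.
Arguments catenary {M} a N.
Arguments many_fact {M} a.

Section Gen.
Context {M : monoid}.
Notation "x * y" := (@mul M x y).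
Implicit Types (l m k z y w : list M) (a b c d u : M).


Lemma mulr1 (a : M) : a * one M = a.
Proof. rewrite mulC; apply mul1. Qed.

Lemma unit_one : is_unit (one M).
Proof. exists (one M); apply mul1. Qed.

Lemma unit_mul (a b : M) : is_unit a -> is_unit b -> is_unit (a * b).
Proof.
  intros [x Hx] [y Hy]; exists (x * y).
  rewrite <- mulA, (mulA b x y), (mulC b x), <- (mulA x b y), Hy, mulr1; exact Hx.
Qed.

Lemma unit_divl (a b : M) : is_unit (a * b) -> is_unit a.
Proof. intros [x Hx]; exists (b * x); rewrite mulA; exact Hx. Qed.

Lemma unit_divr (a b : M) : is_unit (a * b) -> is_unit b.
Proof. rewrite mulC; apply unit_divl. Qed.

Lemma assoc_refl (a : M) : associated a a.
Proof. exists (one M); split; [apply unit_one | symmetry; apply mulr1]. Qed.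

Lemma assoc_sym (a b : M) : associated a b -> associated b a.
Proof.
  intros [e [[f Hf] He]]; exists f; split.
  - exists e; rewrite mulC; exact Hf.
  - rewrite He, <- mulA, Hf, mulr1; reflexivity.
Qed.

Lemma assoc_trans (a b c : M) : associated a b -> associated b c -> associated a c.
Proof.
  intros [e [He E1]] [f [Hf E2]]; exists (f * e); split.
  - apply unit_mul; assumption.
  - rewrite E1, E2, mulA; reflexivity.
Qed.

Lemma assoc_mul (a b c d : M) : associated a b -> associated c d -> associated (a * c) (b * d).
Proof.
  intros [e [He E1]] [f [Hf E2]]; exists (e * f); split.
  - apply unit_mul; assumption.
  - subst. rewrite <- !mulA; f_equal. rewrite (mulC e), <- !mulA, (mulC f). reflexivity.
Qed.

Lemma assoc_unit (a b : M) : associated a b -> is_unit b -> is_unit a.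
Proof. intros [e [He E]] Hb; subst; apply unit_mul; assumption. Qed.

Lemma units_assoc (a b : M) : is_unit a -> is_unit b -> associated a b.
Proof.
  intros Ha [y Hy]. exists (y * a); split.
  - apply unit_mul; [exists b; rewrite mulC; exact Hy | exact Ha].
  - rewrite mulA, Hy, mul1; reflexivity.
Qed.

Lemma assoc_mul_unit (a u : M) : is_unit u -> associated (a * u) a.
Proof. intros Hu; exists u; split; auto. Qed.

Lemma atom_nonunit (a : M) : atom a -> ~ is_unit a.
Proof. intros [h _]; exact h. Qed.

Lemma lprod_app (l1 l2 : list M) : lprod (l1 ++ l2) = lprod l1 * lprod l2.
Proof.
  induction l1; simpl. - symmetry; apply mul1. - rewrite IHl1, mulA; reflexivity.
Qed.

Definition PA2 (l m : list M) := exists m', Forall2 (@associated M) l m' /\ Permutation m' m.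

Lemma PA_PA2 l m : perm_assoc l m <-> PA2 l m.
Proof.
  split.
  - induction 1 as [|x y l l1 l2 Hxy _ [m' [F P]]].
    + exists []; split; constructor.
    + exists (y :: m'); split; [constructor; assumption|].
      apply Permutation_cons_app; exact P.
  - intros [m' [F P]]; revert m P; induction F as [|x y l m' Hxy F IH]; intros m P.
    + apply Permutation_nil in P; subst; constructor.
    + assert (Hin : In y m) by (apply (Permutation_in _ P); left; reflexivity).
      apply in_split in Hin as [l1 [l2 E]]; subst.
      constructor; [assumption|]. apply IH.
      eapply Permutation_cons_app_inv; exact P.
Qed.

Lemma F2_assoc_sym l m : Forall2 (@associated M) l m -> Forall2 (@associated M) m l.
Proof. induction 1; constructor; auto using assoc_sym. Qed.

Lemma F2_assoc_trans l m k : Forall2 (@associated M) l m -> Forall2 (@associated M) m k -> Forall2 (@associated M) l k.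
Proof.
  intros F; revert k; induction F; intros k G; inversion G; subst; constructor; eauto using assoc_trans.
Qed.

Lemma PA_refl l : perm_assoc l l.
Proof.
  apply PA_PA2; exists l; split; [|apply Permutation_refl].
  induction l; constructor; auto using assoc_refl.
Qed.

Lemma PA_sym l m : perm_assoc l m -> perm_assoc m l.
Proof.
  rewrite !PA_PA2; intros [m' [F P]].
  destruct (Permutation_Forall2 P (F2_assoc_sym F)) as [l' [P' F']].
  exists l'; split; [exact F'| apply Permutation_sym; exact P'].
Qed.

Lemma PA_trans l m k : perm_assoc l m -> perm_assoc m k -> perm_assoc l k.
Proof.
  rewrite !PA_PA2; intros [m' [F P]] [k' [G Q]].
  destruct (Permutation_Forall2 (Permutation_sym P) G) as [k'' [P' F']].
  exists k''; split; [eapply F2_assoc_trans; eauto|].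
  eapply Permutation_trans; [apply Permutation_sym; exact P'| exact Q].
Qed.

Lemma PA_app l1 m1 l2 m2 : perm_assoc l1 m1 -> perm_assoc l2 m2 -> perm_assoc (l1 ++ l2) (m1 ++ m2).
Proof.
  rewrite !PA_PA2; intros [a [F P]] [b [G Q]]; exists (a ++ b); split.
  - apply Forall2_app; assumption.
  - apply Permutation_app; assumption.
Qed.

Lemma PA_length l m : perm_assoc l m -> length l = length m.
Proof. induction 1; simpl; auto. rewrite length_app in *; simpl; lia. Qed.

Lemma lprod_perm l m : Permutation l m -> lprod l = lprod m.
Proof.
  induction 1; simpl; auto.
  - rewrite IHPermutation; reflexivity.
  - rewrite !mulA, (mulC y x); reflexivity.
  - congruence.
Qed.

Lemma PA_lprod l m : perm_assoc l m -> associated (lprod l) (lprod m).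
Proof.
  rewrite PA_PA2; intros [m' [F P]]. rewrite <- (lprod_perm P).
  clear P; induction F; simpl; [apply assoc_refl| apply assoc_mul; assumption].
Qed.

Lemma atom_assoc a b : associated a b -> atom b -> atom a.
Proof.
  intros [e [He E]] [Hb Hat]; split.
  - intro Ha. apply Hb. rewrite E in Ha. eapply unit_divl; exact Ha.
  - intros x y Exy. destruct He as [f Hf].
    assert (b = x * (y * f)).
    { rewrite mulA, <- Exy, E, <- mulA, Hf, mulr1; reflexivity. }
    destruct (Hat _ _ H) as [h|h]; [left; exact h| right; eapply unit_divl; exact h].
Qed.

Lemma PA_atoms l m : perm_assoc l m -> Forall atom m -> Forall atom l.
Proof.
  induction 1; intros F; [constructor|].
  apply Forall_app in F as [F1 F2]. inversion F2; subst. constructor.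
  - eapply atom_assoc; eauto.
  - apply IHperm_assoc, Forall_app; split; assumption.
Qed.

Lemma PA_fact a l m : perm_assoc l m -> factorization a m -> factorization a l.
Proof.
  intros P [F A]; split; [eapply PA_atoms; eauto|].
  eapply assoc_trans; [apply PA_lprod; exact P| exact A].
Qed.

Lemma dist_le_PA z y : perm_assoc z y -> dist_le z y 0.
Proof.
  intros P; exists z, [], []; rewrite app_nil_r; repeat split; auto using PA_refl, PA_sym.
Qed.

Lemma dist_le_0 z y : dist_le z y 0 -> perm_assoc z y.
Proof.
  intros [c [v [w [P1 [P2 [L1 L2]]]]]].
  destruct v; [|simpl in L1; lia]. destruct w; [|simpl in L2; lia].
  rewrite app_nil_r in *. eapply PA_trans; [exact P1| apply PA_sym; exact P2].
Qed.

Lemma dist_le_mono z y N K : dist_le z y N -> N <= K -> dist_le z y K.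
Proof. intros [c [v [w [P1 [P2 [L1 L2]]]]]] h; exists c, v, w; repeat split; auto; lia. Qed.

Lemma chain_fact_l a N z y : chain a N z y -> factorization a z.
Proof. destruct 1; auto. Qed.
Lemma chain_fact_r a N z y : chain a N z y -> factorization a y.
Proof. induction 1; auto. Qed.

Lemma chain_trans a N z y w : chain a N z y -> chain a N y w -> chain a N z w.
Proof. induction 1; intros; auto. eapply chain_step; eauto. Qed.

Lemma chain_mono a N K z y : chain a N z y -> N <= K -> chain a K z y.
Proof. induction 1; intros; [constructor; auto| eapply chain_step; eauto using dist_le_mono]. Qed.

Lemma chain_PA a N z y : factorization a z -> factorization a y -> perm_assoc z y -> chain a N z y.
Proof.
  intros Fz Fy P. eapply chain_step; [exact Fz| |constructor; exact Fy].
  eapply dist_le_mono; [apply dist_le_PA; exact P| lia].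
Qed.

Lemma chain0_PA a z y : chain a 0 z y -> perm_assoc z y.
Proof.
  induction 1; [apply PA_refl|]. eapply PA_trans; [apply dist_le_0; eauto| auto].
Qed.

Lemma fact_unit a l : factorization a l -> is_unit a -> l = [].
Proof.
  intros [F A] U. destruct l as [|x l]; auto. exfalso.
  inversion F; subst. apply (atom_nonunit H1).
  apply (@unit_divl x (lprod l)). eapply assoc_unit; eauto.
Qed.

Lemma fact_atom_len a l : factorization a l -> atom a -> length l = 1.
Proof.
  intros [F A] At. destruct l as [|x l].
  - exfalso. apply (atom_nonunit At). eapply assoc_unit; [apply assoc_sym; exact A| apply unit_one].
  - destruct l as [|y l]; auto. exfalso.
    inversion F; subst. inversion H2; subst.
    destruct (assoc_sym A) as [e [He E]]. simpl in E.
    destruct (proj2 At (x) ((y * lprod l) * e)) as [h|h].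
    + rewrite E, <- mulA; reflexivity.
    + exact (atom_nonunit H1 h).
    + apply (atom_nonunit H3). apply unit_divl in h. eapply unit_divl; exact h.
Qed.

End Gen.


Lemma filt_assoc (A : Type) (M : monoid) (f : A -> car M) (Q : A -> bool) (z : list A) :
  (forall p, In p z -> Q p = false -> is_unit (f p)) ->
  associated (lprod (map f z)) (lprod (map f (filter Q z))).
Proof.
  induction z as [|x t IH]; intros h; simpl; [apply assoc_refl|].
  destruct (Q x) eqn:E; simpl.
  - apply assoc_mul; [apply assoc_refl| apply IH; intros; apply h; [right|]; auto].
  - eapply assoc_trans; [|apply IH; intros; apply h; [right|]; auto].
    rewrite mulC. apply assoc_mul_unit. apply h; [left|]; auto.
Qed.

Lemma lprod_units (M : monoid) (l : list M) : (forall x, In x l -> is_unit x) -> is_unit (lprod l).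
Proof.
  induction l; simpl; intros h; [apply unit_one|]. apply unit_mul; auto.
Qed.

Lemma filter_all (A : Type) (f : A -> bool) l : (forall x, In x l -> f x = true) -> filter f l = l.
Proof. induction l; simpl; intros h; auto. rewrite h; auto. f_equal; auto. Qed.

Lemma PA_cons_inv (M : monoid) (x : M) l m : perm_assoc (x :: l) m ->
  exists m1 b m2, m = m1 ++ b :: m2 /\ associated x b /\ perm_assoc l (m1 ++ m2).
Proof. intros h; inversion h; subst; eauto 6. Qed.

Section Prod.
Variable n : nat.
Variable H : idx n -> monoid.
Notation P := (prod_monoid H).
Implicit Types (p q : car P) (z y w : list (car P)).

Definition idx_eq_dec (i j : idx n) : {i = j} + {i <> j}.
Proof.
  destruct i as [i hi], j as [j hj]; destruct (Nat.eq_dec i j) as [e|e].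
  - left; subst; f_equal; apply le_unique.
  - right; intros E; inversion E; contradiction.
Defined.

Definition upd (p : car P) (i : idx n) (x : car (H i)) : car P :=
  fun j => match idx_eq_dec i j with
           | left e => eq_rect i (fun k => car (H k)) x j e
           | right _ => p j end.

Lemma upd_same p i x : upd p i x i = x.
Proof.
  unfold upd; destruct (idx_eq_dec i i) as [e|ne]; [|contradiction].
  rewrite (UIP_dec idx_eq_dec e eq_refl); reflexivity.
Qed.

Lemma upd_other p i x j : i <> j -> upd p i x j = p j.
Proof. unfold upd; destruct (idx_eq_dec i j); [contradiction| reflexivity]. Qed.

Definition inj i (x : car (H i)) : car P := upd (one P) i x.

Lemma inj_same i x : inj i x i = x.
Proof. apply upd_same. Qed.
Lemma inj_other i x j : i <> j -> inj i x j = one (H j).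
Proof. intros; unfold inj; rewrite upd_other; auto. Qed.

Lemma unit_prod p : is_unit p <-> forall i, is_unit (p i).
Proof.
  split.
  - intros [v Hv] i; exists (v i). exact (f_equal (fun f => f i) Hv).
  - intros h. exists (fun i => proj1_sig (constructive_indefinite_description _ (h i))).
    apply functional_extensionality_dep; intro i.
    change (mul (p i) (proj1_sig (constructive_indefinite_description _ (h i))) = one (H i)).
    destruct (constructive_indefinite_description _ (h i)) as [v hv]; simpl; exact hv.
Qed.

Lemma assoc_prod p q : associated p q <-> forall i, associated (p i) (q i).
Proof.
  split.
  - intros [e [He E]] i; exists (e i); split; [apply unit_prod; auto|].
    exact (f_equal (fun f => f i) E).
  - intros h.
    exists (fun i => proj1_sig (constructive_indefinite_description _ (h i))); split.
    + apply unit_prod; intro i.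
      destruct (constructive_indefinite_description _ (h i)) as [v hv]; simpl; apply hv.
    + apply functional_extensionality_dep; intro i.
      change (p i = mul (q i) (proj1_sig (constructive_indefinite_description _ (h i)))).
      destruct (constructive_indefinite_description _ (h i)) as [v hv]; simpl; apply hv.
Qed.

Lemma mul_at p q i : (@mul P p q) i = mul (p i) (q i).
Proof. reflexivity. Qed.

Lemma atom_prod p : atom p <-> exists i, atom (p i) /\ forall j, j <> i -> is_unit (p j).
Proof.
  split.
  - intros [nu hat].
    assert (exists i, ~ is_unit (p i)) as [i hi].
    { apply not_all_ex_not; intro h; apply nu, unit_prod; exact h. }
    assert (Hsplit : forall x y : car (H i), p i = mul x y ->
              p = @mul P (upd (one P) i x) (upd p i y)).
    { intros x y E; apply functional_extensionality_dep; intro k; rewrite mul_at.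
      destruct (idx_eq_dec i k) as [e|ne].
      - subst k; rewrite !upd_same; exact E.
      - rewrite !upd_other; auto. symmetry; apply mul1. }
    exists i; split.
    + split; auto. intros x y E. destruct (hat _ _ (Hsplit x y E)) as [h|h].
      * left; apply unit_prod with (i := i) in h; rewrite upd_same in h; exact h.
      * right; apply unit_prod with (i := i) in h; rewrite upd_same in h; exact h.
    + intros j ne. apply NNPP; intro hj.
      destruct (hat _ _ (Hsplit (p i) (one (H i)) (eq_sym (mulr1 (p i))))) as [h|h].
      * apply unit_prod with (i := i) in h; rewrite upd_same in h; contradiction.
      * apply unit_prod with (i := j) in h; rewrite upd_other in h; auto.
  - intros [i [ai hj]]; split.
    + intros h; apply unit_prod with (i := i) in h; exact (atom_nonunit ai h).
    + intros b c E.
      assert (Ei : p i = mul (b i) (c i)) by (rewrite E; reflexivity).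
      destruct (proj2 ai _ _ Ei) as [h|h]; [left|right]; apply unit_prod; intro k;
        (destruct (idx_eq_dec k i) as [e|ne]; [subst; exact h|]);
        assert (Ek : is_unit (p k)) by auto; rewrite E, mul_at in Ek.
      * eapply unit_divl; exact Ek.
      * eapply unit_divr; exact Ek.
Qed.

Definition bel i p : bool :=
  if excluded_middle_informative (is_unit (p i)) then false else true.

Lemma bel_true i p : bel i p = true <-> ~ is_unit (p i).
Proof. unfold bel; destruct excluded_middle_informative; split; intros; auto; congruence. Qed.
Lemma bel_false i p : bel i p = false <-> is_unit (p i).
Proof. unfold bel; destruct excluded_middle_informative; split; intros; auto; try congruence; contradiction. Qed.

Lemma atom_bel p : atom p -> exists i, bel i p = true.
Proof. intros h; apply atom_prod in h as [i [ai _]]; exists i; apply bel_true, atom_nonunit, ai. Qed.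

Lemma bel_uniq p i j : atom p -> bel i p = true -> bel j p = true -> i = j.
Proof.
  intros h hi hj; apply atom_prod in h as [t [ta ht]].
  apply bel_true in hi; apply bel_true in hj.
  destruct (idx_eq_dec i t); [|exfalso; apply hi, ht; auto].
  destruct (idx_eq_dec j t); [congruence|exfalso; apply hj, ht; auto].
Qed.

Lemma bel_atom p i : atom p -> bel i p = true -> atom (p i) /\ forall j, j <> i -> is_unit (p j).
Proof.
  intros h hi; pose proof h as h'; apply atom_prod in h as [t [ta ht]].
  assert (i = t). { eapply bel_uniq; [exact h'|exact hi|]. apply bel_true, atom_nonunit, ta. }
  subst; auto.
Qed.

Definition proj i z : list (car (H i)) := map (fun p => p i) (filter (bel i) z).

Lemma proj_app i l1 l2 : proj i (l1 ++ l2) = proj i l1 ++ proj i l2.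
Proof. unfold proj; rewrite filter_app, map_app; reflexivity. Qed.
Lemma proj_cons_t i p z : bel i p = true -> proj i (p :: z) = p i :: proj i z.
Proof. intros h; unfold proj; simpl; rewrite h; reflexivity. Qed.
Lemma proj_cons_f i p z : bel i p = false -> proj i (p :: z) = proj i z.
Proof. intros h; unfold proj; simpl; rewrite h; reflexivity. Qed.
Lemma proj_nil i : proj i [] = [].
Proof. reflexivity. Qed.

Lemma lprod_at z i : (lprod z) i = lprod (map (fun p => p i) z).
Proof.
  induction z as [|x z IH]; [reflexivity|].
  change (mul (x i) ((lprod z) i) = mul (x i) (lprod (map (fun p => p i) z))).
  rewrite IH; reflexivity.
Qed.

Lemma atoms_proj z i : Forall atom z -> Forall atom (proj i z).
Proof.
  intros F; apply Forall_forall; intros x hx; unfold proj in hx.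
  apply in_map_iff in hx as [p [E hp]]; subst. apply filter_In in hp as [hp hb].
  apply (proj1 (@bel_atom p i (proj1 (Forall_forall _ _) F _ hp) hb)).
Qed.

Lemma atoms_nonunit (M : monoid) (l : list M) : Forall atom l -> Forall (fun x => ~ is_unit x) l.
Proof. intros F; eapply Forall_impl; [|exact F]; intros; apply atom_nonunit; auto. Qed.

Lemma fact_proj a z i : factorization a z -> factorization (a i) (proj i z).
Proof.
  intros [F A]; split; [apply atoms_proj; auto|].
  eapply assoc_trans; [apply assoc_sym, filt_assoc|].
  - intros p _ hb; apply bel_false; exact hb.
  - rewrite <- lprod_at. apply assoc_prod; exact A.
Qed.

Lemma PA_proj z z' i : perm_assoc z z' -> perm_assoc (proj i z) (proj i z').
Proof.
  induction 1 as [|x y l l1 l2 Hxy _ IH]; [constructor|].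
  rewrite proj_app in *. apply assoc_prod with (i := i) in Hxy.
  destruct (bel i x) eqn:Ex.
  - assert (Ey : bel i y = true).
    { apply bel_true; apply bel_true in Ex; intro h; apply Ex; eapply assoc_unit; eauto. }
    rewrite proj_cons_t, proj_cons_t; auto. constructor; auto.
  - assert (Ey : bel i y = false).
    { apply bel_false; apply bel_false in Ex; eapply assoc_unit; [apply assoc_sym|]; eauto. }
    rewrite proj_cons_f, proj_cons_f; auto.
Qed.

Lemma proj_len i z : length (proj i z) <= length z.
Proof. unfold proj; rewrite length_map; apply filter_length_le. Qed.

Lemma dist_proj z z' N i : dist_le z z' N -> dist_le (proj i z) (proj i z') N.
Proof.
  intros [c [v [w [P1 [P2 [L1 L2]]]]]]; exists (proj i c), (proj i v), (proj i w).
  rewrite <- !proj_app; repeat split; try (apply PA_proj; auto).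
  - pose proof (proj_len i v); lia.
  - pose proof (proj_len i w); lia.
Qed.

Lemma chain_proj a N z z' i : chain a N z z' -> chain (a i) N (proj i z) (proj i z').
Proof.
  induction 1; [constructor; apply fact_proj; auto|].
  eapply chain_step; [apply fact_proj; eauto| apply dist_proj; eauto| auto].
Qed.

End Prod.

Arguments inj {n H} i x _.

Section Prod2.
Variable n : nat.
Variable H : idx n -> monoid.
Notation P := (prod_monoid H).
Implicit Types (p q : car P) (z y w : list (car P)).

Lemma inj_mul i (x y : car (H i)) : inj i (mul x y) = @mul P (inj i x) (inj i y).
Proof.
  apply functional_extensionality_dep; intro k; rewrite mul_at.
  destruct (idx_eq_dec i k) as [e|ne].
  - subst k; rewrite !inj_same; reflexivity.
  - rewrite !inj_other; auto. symmetry; apply mul1.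
Qed.

Lemma inj_one i : inj i (one (H i)) = one P.
Proof.
  apply functional_extensionality_dep; intro k.
  destruct (idx_eq_dec i k) as [e|ne].
  - subst k; rewrite !inj_same; reflexivity.
  - rewrite !inj_other; auto.
Qed.

Lemma lprod_inj i (g : list (car (H i))) : lprod (map (inj i) g) = inj i (lprod g).
Proof.
  induction g as [|x g IH]; [symmetry; apply inj_one|].
  change (@mul P (inj i x) (lprod (map (inj i) g)) = inj i (mul x (lprod g))).
  rewrite IH, inj_mul; reflexivity.
Qed.

Lemma inj_atom (i : idx n) (x : car (H i)) : atom x -> atom (inj i x).
Proof.
  intros h; apply atom_prod; exists i; split; [rewrite inj_same; auto|].
  intros j ne; rewrite inj_other; auto; apply unit_one.
Qed.

Lemma inj_assoc (i : idx n) (x y : car (H i)) : associated x y -> associated (inj i x) (inj i y).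
Proof.
  intros h; apply assoc_prod; intro k.
  destruct (idx_eq_dec i k) as [e|ne].
  - subst k; rewrite !inj_same; auto.
  - rewrite !inj_other; auto; apply assoc_refl.
Qed.

Lemma PA_inj (i : idx n) (g g' : list (car (H i))) : perm_assoc g g' -> perm_assoc (map (inj i) g) (map (inj i) g').
Proof.
  induction 1; simpl; [constructor|].
  rewrite map_app; simpl. constructor; [apply inj_assoc; auto| rewrite <- map_app; auto].
Qed.

Lemma proj_inj_same i (g : list (car (H i))) :
  Forall (fun x => ~ is_unit x) g -> proj i (map (inj i) g) = g.
Proof.
  induction 1; [reflexivity|]. cbn [map]; rewrite proj_cons_t.
  - rewrite inj_same, IHForall; reflexivity.
  - apply bel_true; rewrite inj_same; auto.
Qed.

Lemma proj_inj_other (i j : idx n) (g : list (car (H i))) : i <> j -> proj j (map (inj i) g) = [].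
Proof.
  intros ne; induction g; [reflexivity|]. cbn [map]; rewrite proj_cons_f; auto.
  apply bel_false; rewrite inj_other; auto; apply unit_one.
Qed.

Definition rest (i : idx n) z := filter (fun p => negb (bel i p)) z.

Lemma fact_repl (a : car P) z (i : idx n) (g : list (car (H i))) : factorization a z -> factorization (a i) g ->
  factorization a (rest i z ++ map (inj i) g).
Proof.
  intros [Fz Az] [Fg Ag]; split.
  - apply Forall_app; split.
    + apply Forall_forall; intros x hx; apply filter_In in hx as [hx _].
      exact (proj1 (Forall_forall _ _) Fz _ hx).
    + apply Forall_map; eapply Forall_impl; [|exact Fg]; intros; apply inj_atom; auto.
  - rewrite lprod_app, lprod_inj. apply assoc_prod; intro k. rewrite mul_at.
    destruct (idx_eq_dec i k) as [e|ne].
    + subst k; rewrite inj_same. eapply assoc_trans; [|exact Ag].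
      rewrite mulC; apply assoc_mul_unit. rewrite lprod_at.
      apply lprod_units; intros x hx. apply in_map_iff in hx as [p [E hp]]; subst.
      apply filter_In in hp as [_ hp]. apply bel_false. destruct (bel i p); simpl in *; congruence.
    + rewrite inj_other; auto. rewrite mulr1. rewrite lprod_at.
      eapply assoc_trans; [apply assoc_sym, filt_assoc|].
      * intros p hp hb. destruct (bel i p) eqn:E; simpl in hb; try congruence.
        apply (proj2 (bel_atom i (proj1 (Forall_forall _ _) Fz _ hp) E)); auto.
      * rewrite <- lprod_at; apply assoc_prod; exact Az.
Qed.
End Prod2.


Section Prod3.
Variable n : nat.
Variable H : idx n -> monoid.
Notation P := (prod_monoid H).
Implicit Types (p q : car P) (z y w : list (car P)) (i j : idx n).

Lemma proj_rest_same i z : proj i (rest i z) = [].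
Proof.
  induction z as [|x z IH]; [reflexivity|]. unfold rest; simpl.
  destruct (bel i x) eqn:E; simpl; [exact IH|]. rewrite proj_cons_f; auto.
Qed.

Lemma proj_rest_other i j z : Forall atom z -> i <> j -> proj j (rest i z) = proj j z.
Proof.
  intros F ne; induction F as [|x z ax F IH]; [reflexivity|]. unfold rest in *; cbn [filter].
  destruct (bel i x) eqn:E; cbn [negb].
  - rewrite (proj_cons_f j x z); auto.
    destruct (bel j x) eqn:E2; auto. exfalso; apply ne; eapply bel_uniq; eauto.
  - destruct (bel j x) eqn:E2.
    + rewrite !proj_cons_t; auto; f_equal; auto.
    + rewrite !proj_cons_f; auto.
Qed.

Lemma proj_repl_same i z (g : list (car (H i))) :
  Forall atom g -> proj i (rest i z ++ map (inj i) g) = g.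
Proof.
  intros F; rewrite proj_app, proj_rest_same, proj_inj_same; auto. apply atoms_nonunit; auto.
Qed.

Lemma proj_repl_other i j z (g : list (car (H i))) :
  Forall atom z -> i <> j -> proj j (rest i z ++ map (inj i) g) = proj j z.
Proof.
  intros F ne; rewrite proj_app, proj_rest_other, proj_inj_other; auto. apply app_nil_r.
Qed.

Lemma dist_lift i R (g g' : list (car (H i))) N :
  dist_le g g' N -> dist_le (R ++ map (inj i) g) (R ++ map (inj i) g') N.
Proof.
  intros [c [v [w [P1 [P2 [L1 L2]]]]]].
  exists (R ++ map (inj i) c), (map (inj i) v), (map (inj i) w).
  rewrite <- !app_assoc, <- !map_app, !length_map; repeat split; auto;
    apply PA_app; auto using PA_refl, PA_inj.
Qed.

Lemma chain_lift (a : car P) i R N (g1 g2 : list (car (H i))) :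
  (forall g, factorization (a i) g -> factorization a (R ++ map (inj i) g)) ->
  chain (a i) N g1 g2 -> chain a N (R ++ map (inj i) g1) (R ++ map (inj i) g2).
Proof.
  intros hf; induction 1; [constructor; auto|].
  eapply chain_step; [auto| apply dist_lift; eauto| auto].
Qed.

Lemma assoc_atom_inj p i : atom p -> bel i p = true -> associated p (inj i (p i)).
Proof.
  intros h hb; apply assoc_prod; intro k.
  destruct (idx_eq_dec i k) as [e|ne].
  - subst k; rewrite inj_same; apply assoc_refl.
  - rewrite inj_other; auto. apply units_assoc; [|apply unit_one].
    apply (proj2 (bel_atom i h hb)); auto.
Qed.

Lemma PA_decomp i z : Forall atom z -> perm_assoc z (rest i z ++ map (inj i) (proj i z)).
Proof.
  induction 1 as [|x z ax F IH]; [constructor|]. unfold rest; cbn [filter].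
  destruct (bel i x) eqn:E; cbn [negb app].
  - rewrite proj_cons_t; auto. cbn [map]. constructor; [apply assoc_atom_inj; auto| exact IH].
  - rewrite proj_cons_f; auto. apply (@pa_cons _ x x z [] _); [apply assoc_refl| exact IH].
Qed.

Lemma split_proj i z m1 (b : car (H i)) m2 : proj i z = m1 ++ b :: m2 ->
  exists z1 q z2, z = z1 ++ q :: z2 /\ bel i q = true /\ q i = b /\
                  proj i z1 = m1 /\ proj i z2 = m2.
Proof.
  revert m1; induction z as [|x t IH]; intros m1 E.
  - destruct m1; discriminate.
  - destruct (bel i x) eqn:Ex.
    + rewrite proj_cons_t in E; auto. destruct m1 as [|c m1]; simpl in E; inversion E; subst.
      * exists [], x, t; repeat split; auto.
      * destruct (IH _ H2) as [z1 [q [z2 [E1 [E2 [E3 [E4 E5]]]]]]].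
        exists (x :: z1), q, z2; subst; repeat split; auto. rewrite proj_cons_t; auto.
    + rewrite proj_cons_f in E; auto.
      destruct (IH _ E) as [z1 [q [z2 [E1 [E2 [E3 [E4 E5]]]]]]].
      exists (x :: z1), q, z2; subst; repeat split; auto. rewrite proj_cons_f; auto.
Qed.

Lemma same_proj y z : Forall atom y -> Forall atom z ->
  (forall i, perm_assoc (proj i y) (proj i z)) -> perm_assoc y z.
Proof.
  intros Fy; revert z; induction Fy as [|x t ax Ft IH]; intros z Fz hP.
  - destruct z as [|p t]; [constructor|]. exfalso.
    inversion Fz; subst. destruct (atom_bel H2) as [i hi].
    specialize (hP i). rewrite proj_cons_t in hP; auto. apply PA_length in hP; discriminate.
  - destruct (atom_bel ax) as [i hi]. pose proof (hP i) as hPi.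
    rewrite proj_cons_t in hPi; auto.
    destruct (PA_cons_inv hPi) as [m1 [b [m2 [E1 [E2 E3]]]]].
    apply split_proj in E1 as [z1 [q [z2 [Ez [Eq1 [Eq2 [Eq3 Eq4]]]]]]]. subst z.
    apply Forall_app in Fz as [Fz1 Fz2]. apply Forall_cons_iff in Fz2 as [aq Fz2'].
    constructor.
    + apply assoc_prod; intro k. destruct (idx_eq_dec k i) as [e|ne].
      * subst k; rewrite Eq2; exact E2.
      * apply units_assoc; [apply (proj2 (bel_atom i ax hi)); auto|].
        apply (proj2 (bel_atom i aq Eq1)); auto.
    + apply IH; [apply Forall_app; auto|]. intro j.
      destruct (idx_eq_dec j i) as [e|ne].
      * subst j. rewrite proj_app, Eq3, Eq4; exact E3.
      * specialize (hP j). rewrite proj_cons_f, proj_app, proj_cons_f, <- proj_app in hP; auto.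
        all: match goal with |- bel ?jj ?r = false =>
          destruct (bel jj r) eqn:Eb; auto; exfalso; apply ne; eapply (@bel_uniq _ _ r); eauto end.
Qed.

Lemma fact_atoms (M : monoid) (a : M) l : factorization a l -> Forall atom l.
Proof. intros [F _]; exact F. Qed.

Lemma glue (a : car P) N z z' : factorization a z -> factorization a z' ->
  (forall i, chain (a i) N (proj i z) (proj i z')) -> chain a N z z'.
Proof.
  intros Fz Fz' hC.
  assert (Q : forall k y, factorization a y ->
     (forall i, proj1_sig i < k -> chain (a i) N (proj i y) (proj i z')) ->
     (forall i, k <= proj1_sig i -> perm_assoc (proj i y) (proj i z')) -> chain a N y z').
  { induction k as [|k IHk]; intros y Fy HC HP.
    - apply chain_PA; auto. apply same_proj; eauto using fact_atoms.
      intro i; apply HP; lia.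
    - destruct (lt_dec k n) as [hk|hk].
      + set (i0 := exist (fun m => m < n) k hk : idx n).
        assert (Hrep : forall g, factorization (a i0) g ->
                  factorization a (rest i0 y ++ map (inj i0) g)).
        { intros; apply fact_repl; auto. }
        assert (Heq : forall i, proj1_sig i = k -> i = i0).
        { intros [m hm] e; simpl in e; subst m; unfold i0; f_equal; apply le_unique. }
        apply chain_trans with (rest i0 y ++ map (inj i0) (proj i0 y)).
        { apply chain_PA; auto. apply Hrep, fact_proj, Fy. apply PA_decomp; eauto using fact_atoms. }
        apply chain_trans with (rest i0 y ++ map (inj i0) (proj i0 z')).
        { apply chain_lift; [exact Hrep| apply HC; simpl; lia]. }
        apply IHk.
        * apply Hrep, fact_proj; exact Fz'.
        * intros i hi. assert (i0 <> i) by (intro e; subst i; simpl in hi; lia).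
          rewrite proj_repl_other; [apply HC; lia| eauto using fact_atoms| auto].
        * intros i hi. destruct (idx_eq_dec i0 i) as [e|ne].
          -- subst i. rewrite proj_repl_same; [apply PA_refl|].
             eapply fact_atoms, fact_proj; exact Fz'.
          -- rewrite proj_repl_other; eauto using fact_atoms. apply HP.
             assert (proj1_sig i <> k) by (intro e; apply ne; symmetry; apply Heq; auto). lia.
      + apply IHk; [exact Fy| intros i hi; apply HC; lia| intros [m hm] hi; simpl in hi; exfalso; lia]. }
  apply (Q n); [exact Fz| intros i _; apply hC| intros [m hm] hi; simpl in hi; exfalso; lia].
Qed.

End Prod3.


Lemma exists_min (Q : nat -> Prop) k : Q k -> exists m, Q m /\ forall j, Q j -> m <= j.
Proof.
  induction k as [k IH] using lt_wf_ind; intros qk.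
  destruct (classic (exists j, j < k /\ Q j)) as [[j [hj qj]]|hn].
  - exact (IH j hj qj).
  - exists k; split; auto. intros j qj; apply Nat.nlt_ge; intro; apply hn; eauto.
Qed.

Section Main.
Variable n : nat.
Variable H : idx n -> monoid.
Notation P := (prod_monoid H).
Implicit Types (p q : car P) (z y w : list (car P)) (i j : idx n).

Lemma fact_inj i (a0 : car (H i)) g : factorization a0 g -> factorization (inj i a0) (map (inj i) g).
Proof.
  intros [F A]; split.
  - apply Forall_map; eapply Forall_impl; [|exact F]; intros; apply inj_atom; auto.
  - rewrite lprod_inj; apply inj_assoc; exact A.
Qed.

Lemma fact_nonunit (M : monoid) (a : M) l : factorization a l -> Forall (fun x => ~ is_unit x) l.
Proof. intros [F _]; apply atoms_nonunit; exact F. Qed.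

Lemma fact_support (w : car P) z p : factorization w z -> In p z ->
  exists t, bel t p = true /\ ~ is_unit (w t).
Proof.
  intros F hp. pose proof (proj1 (Forall_forall _ _) (fact_atoms F) _ hp) as ap.
  destruct (atom_bel ap) as [t ht]. exists t; split; auto. intro hu.
  pose proof (fact_unit (fact_proj t F) hu) as E.
  assert (In (p t) (proj t z)) as hin by (unfold proj; apply (in_map (fun q : car P => q t)); apply filter_In; auto).
  rewrite E in hin; destruct hin.
Qed.

Lemma inL_single (w : car P) i k : (forall t, t <> i -> is_unit (w t)) ->
  (in_L w k <-> in_L (w i) k).
Proof.
  intros hw; split.
  - intros [z [F L]]. exists (proj i z); split; [apply fact_proj; auto|].
    unfold proj; rewrite length_map, filter_all; auto. intros p hp.
    assert (exists t, bel t p = true /\ ~ is_unit (w t)) as [t [ht hu]] by (eapply fact_support; eauto).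
    destruct (idx_eq_dec t i) as [e|ne]; [subst; auto| exfalso; apply hu; auto].
  - intros [g [F L]]. exists (map (inj i) g). split; [|rewrite length_map; auto].
    split.
    + apply Forall_map; eapply Forall_impl; [|exact (fact_atoms F)]; intros; apply inj_atom; auto.
    + rewrite lprod_inj. apply assoc_prod; intro k'.
      destruct (idx_eq_dec i k') as [e|ne].
      * subst k'; rewrite inj_same; exact (proj2 F).
      * rewrite inj_other; auto. apply units_assoc; [apply unit_one| apply hw; auto].
Qed.

Lemma len_two i j z : Forall atom z -> i <> j ->
  (forall p, In p z -> bel i p = true \/ bel j p = true) ->
  length z = length (proj i z) + length (proj j z).
Proof.
  intros F ne; induction F as [|x t ax F IH]; intros h; [reflexivity|].
  destruct (h x (or_introl eq_refl)) as [hi|hj].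
  - assert (bel j x = false).
    { destruct (bel j x) eqn:E; auto. exfalso; apply ne; eapply (@bel_uniq _ _ x); eauto. }
    rewrite proj_cons_t, proj_cons_f; auto. cbn [length]; rewrite IH; [lia| intros; apply h; right; auto].
  - assert (bel i x = false).
    { destruct (bel i x) eqn:E; auto. exfalso; apply ne; eapply (@bel_uniq _ _ x); eauto. }
    rewrite proj_cons_f, proj_cons_t; auto. cbn [length]; rewrite IH; [lia| intros; apply h; right; auto].
Qed.

Lemma part_R d : Rset P d <-> exists i, Rset (H i) d.
Proof.
  split.
  - intros [h2 [a [z [z' [Fz [Fz' [nPA [[Dle Dmin] nch]]]]]]]].
    apply NNPP; intros hno. apply nch. apply glue; auto. intro i.
    apply NNPP; intro hci. apply hno; exists i. split; auto.
    exists (a i), (proj i z), (proj i z').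
    split; [apply fact_proj; auto|]. split; [apply fact_proj; auto|].
    split; [|split; [split|]].
    + intro hp; apply hci; apply chain_PA; auto; apply fact_proj; auto.
    + apply dist_proj; auto.
    + intros K hK; apply NNPP; intro hlt; apply hci.
      eapply chain_step; [apply fact_proj; eauto| eapply dist_le_mono; [exact hK| lia]|].
      constructor; apply fact_proj; auto.
    + exact hci.
  - intros [i [h2 [a0 [g [g' [Fg [Fg' [nPA [[Dle Dmin] nch]]]]]]]]].
    split; auto. exists (inj i a0), (map (inj i) g), (map (inj i) g').
    split; [apply fact_inj; auto|]. split; [apply fact_inj; auto|].
    split; [|split; [split|]].
    + intro hp; apply nPA. apply (PA_proj i) in hp.
      rewrite !proj_inj_same in hp; eauto using fact_nonunit.
    + exact (dist_lift i [] Dle).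
    + intros K hK; apply Dmin. apply (dist_proj i) in hK.
      rewrite !proj_inj_same in hK; eauto using fact_nonunit.
    + intro hc; apply nch. apply (chain_proj i) in hc.
      rewrite inj_same, !proj_inj_same in hc; eauto using fact_nonunit.
Qed.

Lemma part_Ca c : Ca P c <-> exists i, Ca (H i) c.
Proof.
  split.
  - intros [a [[z [z' [Fz [Fz' nPA]]]] [Cle Cmin]]].
    assert (Hci : forall i, catenary_le (a i) c).
    { intros i f f' Ff Ff'.
      pose proof (Cle _ _ (fact_repl i Fz Ff) (fact_repl i Fz Ff')) as hc.
      apply (chain_proj i) in hc. rewrite !proj_repl_same in hc; eauto using fact_atoms. }
    assert (c1 : 1 <= c).
    { destruct c; [|lia]. exfalso; apply nPA; apply (@chain0_PA _ a); apply Cle; auto. }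
    apply NNPP; intro hno.
    assert (Hlow : forall i, catenary_le (a i) (c - 1)).
    { intro i. destruct (@exists_min (fun K => catenary_le (a i) K) c (Hci i)) as [ci [Qci minci]].
      destruct (Nat.eq_dec ci c) as [e|ne].
      - exfalso; subst ci. apply hno; exists i, (a i); split; [|split; auto].
        apply NNPP; intro nm.
        assert (catenary_le (a i) 0).
        { intros f f' Ff Ff'. apply chain_PA; auto. apply NNPP; intro np; apply nm.
          exists f, f'; auto. }
        specialize (minci 0 H0); lia.
      - intros f f' Ff Ff'. eapply chain_mono; [apply Qci; auto|].
        specialize (minci c (Hci i)); lia. }
    assert (catenary_le a (c - 1)).
    { intros y y' Fy Fy'. apply glue; auto. intro i; apply Hlow; apply fact_proj; auto. }
    specialize (Cmin _ H0); lia.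
  - intros [i [a0 [[g [g' [Fg [Fg' nPA]]]] [Cle Cmin]]]].
    exists (inj i a0). split.
    + exists (map (inj i) g), (map (inj i) g').
      split; [apply fact_inj; auto|]. split; [apply fact_inj; auto|].
      intro hp; apply nPA. apply (PA_proj i) in hp.
      rewrite !proj_inj_same in hp; eauto using fact_nonunit.
    + split.
      * intros z z' Fz Fz'. apply glue; auto. intro j.
        destruct (idx_eq_dec i j) as [e|ne].
        -- subst j. pose proof (fact_proj i Fz) as F1. pose proof (fact_proj i Fz') as F2.
           rewrite inj_same in *. apply Cle; auto.
        -- pose proof (fact_proj j Fz) as F1. pose proof (fact_proj j Fz') as F2.
           assert (U : is_unit (inj i a0 j)) by (rewrite inj_other; auto; apply unit_one).
           pose proof (fact_unit F1 U) as E1. pose proof (fact_unit F2 U) as E2.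
           rewrite E1, E2; constructor. rewrite E1 in F1; exact F1.
      * intros K hK. apply Cmin. intros f f' Ff Ff'.
        pose proof (hK _ _ (fact_inj Ff) (fact_inj Ff')) as hc.
        apply (chain_proj i) in hc. rewrite inj_same, !proj_inj_same in hc; eauto using fact_nonunit.
Qed.

Lemma part_D m : daleth_star P m <-> exists i, daleth_star (H i) m.
Proof.
  split.
  - intros [u [v [au [av [[k [l [hk [hl hkl]]]] [hm [hm2 hmin]]]]]]].
    destruct (atom_bel au) as [i hi], (atom_bel av) as [j hj].
    destruct (bel_atom i au hi) as [aui uu]. destruct (bel_atom j av hj) as [avj uv].
    destruct (idx_eq_dec i j) as [e|ne].
    + subst j.
      assert (hw : forall t, t <> i -> is_unit ((@mul P u v) t)).
      { intros t ne; rewrite mul_at; apply unit_mul; auto. }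
      assert (T : forall k, in_L (@mul P u v) k <-> in_L (mul (u i) (v i)) k).
      { intro k'. exact (@inL_single (@mul P u v) i k' hw). }
      exists i, (u i), (v i). split; auto. split; auto. split.
      * exists k, l; rewrite <- !T; auto.
      * rewrite <- T; split; auto. split; auto. intros k' hk'; apply hmin; apply T; auto.
    + exfalso.
      assert (All2 : forall k, in_L (@mul P u v) k -> k = 2).
      { intros k' [z [F L]]. subst k'.
        assert (hsup : forall p, In p z -> bel i p = true \/ bel j p = true).
        { intros p hp.
          assert (exists t, bel t p = true /\ ~ is_unit ((@mul P u v) t)) as [t [ht hu]]
            by (eapply fact_support; eauto).
          destruct (idx_eq_dec t i) as [e1|n1]; [subst; auto|].
          destruct (idx_eq_dec t j) as [e2|n2]; [subst; auto|].
          exfalso; apply hu; rewrite mul_at; apply unit_mul; auto. }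
        rewrite (len_two (fact_atoms F) ne hsup).
        pose proof (fact_proj i F) as Fi. pose proof (fact_proj j F) as Fj.
        rewrite mul_at in Fi, Fj.
        assert (L1 : length (proj i z) = 1).
        { apply (fact_atom_len (a := u i)); auto. split; [exact (proj1 Fi)|].
          eapply assoc_trans; [exact (proj2 Fi)| apply assoc_mul_unit; apply uv; auto]. }
        assert (L2 : length (proj j z) = 1).
        { apply (fact_atom_len (a := v j)); auto. split; [exact (proj1 Fj)|].
          eapply assoc_trans; [exact (proj2 Fj)|]. rewrite mulC; apply assoc_mul_unit; apply uu; auto. }
        lia. }
      apply hkl; rewrite (All2 k hk), (All2 l hl); reflexivity.
  - intros [i [u0 [v0 [au [av [[k [l [hk [hl hkl]]]] [hm [hm2 hmin]]]]]]]].
    exists (inj i u0), (inj i v0).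
    assert (T : forall k, in_L (@mul P (inj i u0) (inj i v0)) k <-> in_L (mul u0 v0) k).
    { intro k'. rewrite <- inj_mul.
      rewrite (@inL_single (inj i (mul u0 v0)) i k'), inj_same; [reflexivity|].
      intros t ne; rewrite inj_other; auto; apply unit_one. }
    split; [apply inj_atom; auto|]. split; [apply inj_atom; auto|]. split.
    + exists k, l; rewrite !T; auto.
    + rewrite T; split; auto. split; auto. intros k' hk'; apply hmin; apply T; auto.
Qed.

End Main.

Theorem lemma3p1 (n : nat) (H : idx n -> monoid) (hBF : forall i, BF (H i)) :
  (forall d, Rset (prod_monoid H) d <-> exists i, Rset (H i) d) /\
  (forall c, Ca (prod_monoid H) c <-> exists i, Ca (H i) c) /\
  (forall m, daleth_star (prod_monoid H) m <-> exists i, daleth_star (H i) m).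
Proof.
  split; [intro; apply part_R|]. split; [intro; apply part_Ca| intro; apply part_D].
Qed.
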